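(* Let $B_1,B_2$ be finite commutative groups and $q_1,\dots,q_n>1$ integers, $0\le s\le n$. If $q_1q_2\cdots q_s$ is coprime to $|B_2|$ and $q_{s+1}\cdots q_n$ is coprime to $|B_1|$, then $$(B_1\times B_2)\binom{X_1,\dots,X_n}{\mathbb{Z}_{q_1}\times\cdots\times\mathbb{Z}_{q_n}}=B_1\binom{X_1,\dots,X_s}{\mathbb{Z}_{q_1}\times\cdots\times\mathbb{Z}_{q_s}}\times B_2\binom{X_{s+1},\dots,X_n}{\mathbb{Z}_{q_{s+1}}\times\cdots\times\mathbb{Z}_{q_n}},$$ i.e. a polyfract $(P_1,P_2)$ over $B_1\times B_2$ is $(q_1,\dots,q_n)$-periodic if and only if $P_1$ involves only $X_1,\dots,X_s$ and is $(q_1,\dots,q_s)$-periodic, and $P_2$ involves only $X_{s+1},\dots,X_n$ and is $(q_{s+1},\dots,q_n)$-periodic.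
   Context: $\mathbb{Z}_r=\mathbb{Z}/r\mathbb{Z}$; $\binom{X}{\delta}=X(X-1)\cdots(X-\delta+1)/\delta!$, $\binom{X}{0}=1$. For a finitely generated commutative group $B$, a $B$-polyfract in $X_1,\dots,X_n$ is a formal finite sum $P=\sum_{\delta\in\mathbb{N}^n}P_\delta\prod_j\binom{X_j}{\delta_j}$ with $P_\delta\in B$, evaluated at $x\in\mathbb{Z}^n$ by $P(x)=\sum_\delta(\prod_j\binom{x_j}{\delta_j})P_\delta$; a polyfract over $B_1\times B_2$ is identified with the pair of its coordinate polyfracts. ''$P$ involves $X_j$'' means some $\delta$ with $\delta_j>0$ has $P_\delta\ne0$. $B\binom{X_1,\dots,X_n}{\mathbb{Z}_{q_1}\times\cdots\times\mathbb{Z}_{q_n}}$ is the set of $B$-polyfracts whose evaluation map on $\mathbb{Z}^n$ is $q_j$-periodic in the $j$-th variable for all $j$. *)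

(* Defs.v *)
From HB Require Import structures.
From mathcomp Require Import all_boot all_order all_algebra.
Set Implicit Arguments. Unset Strict Implicit. Unset Printing Implicit Defensive.
Import Order.TTheory GRing.Theory Num.Theory.
Local Open Scope ring_scope.

(* Generalized binomial coefficient binom(x, d) = x(x-1)...(x-d+1)/d! for x : int
   (the division is exact). *)
Definition binz (x : int) (d : nat) : int :=
  ((\prod_(i < d) (x - (i : nat)%:Z)) %/ (d`!)%:Z)%Z.

Definition mindex (n D : nat) := {ffun 'I_n -> 'I_D}.

(* A B-polyfract in X_1..X_n: finitely many coefficients P_delta; every finite
   formal sum has all its nonzero multi-indices in some box [0,D)^n, so we
   represent a polyfract by a box bound D and the coefficient map on the box. *)
Definition polyfract (B : zmodType) (n D : nat) := mindex n D -> B.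

Definition pf_eval (B : zmodType) n D (P : polyfract B n D) (x : 'I_n -> int) : B :=
  \sum_(d : mindex n D) P d *~ (\prod_(j < n) binz (x j) (d j)).

Definition involves (B : zmodType) n D (P : polyfract B n D) (j : 'I_n) : Prop :=
  exists d : mindex n D, (0 < (d j : nat))%N /\ P d != 0.

Definition shift n (x : 'I_n -> int) (j : 'I_n) (k : int) : 'I_n -> int :=
  fun i => if i == j then x i + k else x i.

Definition periodic_in (B : zmodType) n D (P : polyfract B n D) (j : 'I_n) (q : nat) : Prop :=
  forall x : 'I_n -> int, pf_eval P (shift x j q%:Z) = pf_eval P x.

Definition pf_fst (B1 B2 : zmodType) n D (P : polyfract (B1 * B2)%type n D)
  : polyfract B1 n D := fun d => (P d).1.
Definition pf_snd (B1 B2 : zmodType) n D (P : polyfract (B1 * B2)%type n D)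
  : polyfract B2 n D := fun d => (P d).2.

(* Main.v *)
Require Import Defs.
From HB Require Import structures.
From mathcomp Require Import all_boot all_order all_algebra.
From mathcomp Require Import all_fingroup all_solvable.
From mathcomp Require Import ring zify.
From Stdlib Require Import FunctionalExtensionality.
Import Order.TTheory GRing.Theory Num.Theory.
Set Implicit Arguments. Unset Strict Implicit.
Local Open Scope ring_scope.

Definition Pr (x : int) (d : nat) : int := \prod_(i < d) (x - (i : nat)%:Z).

Lemma PrS x d : Pr (x + 1) d.+1 = Pr x d.+1 + (d.+1)%:Z * Pr x d.
Proof.
rewrite /Pr big_ord_recl big_ord_recr /=.
have -> : \prod_(i < d) (x + 1 - (lift ord0 i : nat)%:Z) = \prod_(i < d) (x - (i : nat)%:Z).
  by apply: eq_bigr => i _; rewrite lift0 intS; ring.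
set P := \prod_(i < d) _.
rewrite intS; ring.
Qed.

Lemma Pr0 d : Pr 0 d.+1 = 0.
Proof. by rewrite /Pr big_ord_recl /= subrr mul0r. Qed.

Lemma dvdPr d x : ((d`!)%:Z %| Pr x d)%Z.
Proof.
elim: d x => [|d IH] x; first by rewrite fact0 dvd1z.
have hS : forall y, ((d.+1`!)%:Z %| (d.+1)%:Z * Pr y d)%Z.
  by move=> y; rewrite factS PoszM dvdz_mul.
have pos : forall m : nat, ((d.+1`!)%:Z %| Pr m%:Z d.+1)%Z.
  elim=> [|m IHm]; first by rewrite Pr0 dvdz0.
  by rewrite -addn1 PoszD PrS rpredD.
have neg : forall m : nat, ((d.+1`!)%:Z %| Pr (- m%:Z) d.+1)%Z.
  elim=> [|m IHm]; first by rewrite oppr0 Pr0 dvdz0.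
  have e := PrS (- (m.+1)%:Z) d.
  have em : - (m.+1)%:Z + 1 = - m%:Z by rewrite intS; ring.
  rewrite em in e.
  have -> : Pr (- (m.+1)%:Z) d.+1 = Pr (- m%:Z) d.+1 - (d.+1)%:Z * Pr (- (m.+1)%:Z) d.
    by rewrite e; ring.
  by rewrite rpredB.
by case: x => m; [apply: pos | rewrite NegzE; apply: neg].
Qed.

Lemma binzE x d : binz x d = (Pr x d %/ (d`!)%:Z)%Z.
Proof. by []. Qed.

Lemma factz_neq0 d : (d`!)%:Z != 0.
Proof. by rewrite eqz_nat -lt0n fact_gt0. Qed.

Lemma binz0 x : binz x 0 = 1.
Proof. by rewrite binzE /Pr big_ord0 fact0 divz1. Qed.

Lemma binz0n d : binz 0 d.+1 = 0.
Proof. by rewrite binzE Pr0 div0z. Qed.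

Lemma binzS x d : binz (x + 1) d.+1 = binz x d.+1 + binz x d.
Proof.
have [a ha] := dvdzP (dvdPr d.+1 x).
have [b hb] := dvdzP (dvdPr d x).
rewrite !binzE PrS ha hb !mulzK ?factz_neq0 //.
have -> : a * (d.+1`!)%:Z + (d.+1)%:Z * (b * (d`!)%:Z) = (a + b) * (d.+1`!)%:Z.
  by rewrite factS PoszM; ring.
by rewrite mulzK ?factz_neq0.
Qed.

Lemma binz_nat (m : nat) d : binz m%:Z d = ('C(m, d))%:Z.
Proof.
elim: m d => [|m IH] [|d]; rewrite ?binz0 ?bin0 //.
  by rewrite binz0n bin0n.
have -> : (m.+1)%:Z = m%:Z + 1 by rewrite -addn1 PoszD.
by rewrite binzS !IH binS PoszD.
Qed.

Section Main.
Variables (n : nat).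

Definition T (e : 'I_n -> nat) (x : 'I_n -> int) : int := \prod_(i < n) binz (x i) (e i).

Lemma shift_shift (x : 'I_n -> int) j a b : shift (shift x j a) j b = shift x j (a + b).
Proof.
apply: functional_extensionality => i; rewrite /shift; case: eqP => // _; ring.
Qed.

Lemma shift0 (x : 'I_n -> int) j : shift x j 0 = x.
Proof. by apply: functional_extensionality => i; rewrite /shift; case: eqP => // _; rewrite addr0. Qed.

Definition Dl (B : zmodType) j (g : ('I_n -> int) -> B) : ('I_n -> int) -> B :=
  fun x => g (shift x j 1) - g x.
Arguments Dl {B}.

Definition decr (e : 'I_n -> nat) j k : 'I_n -> nat := fun i => if i == j then (e i - k)%N else e i.

Lemma T_delta e j x :
  T e (shift x j 1) - T e x = if (0 < e j)%N then T (decr e j 1) x else 0.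
Proof.
rewrite /T [X in X - _](bigD1 j) // [X in _ - X](bigD1 j) //=.
have -> : \prod_(i < n | i != j) binz (shift x j 1 i) (e i) =
          \prod_(i < n | i != j) binz (x i) (e i).
  by apply: eq_bigr => i /negbTE h; rewrite /shift h.
rewrite /shift eqxx.
case E: (e j) => [|k]; first by rewrite !binz0 subrr.
rewrite binzS [in RHS](bigD1 j) //= {1}/decr eqxx E subn1 /=.
have -> : \prod_(i < n | i != j) binz (x i) (decr e j 1 i) =
          \prod_(i < n | i != j) binz (x i) (e i).
  by apply: eq_bigr => i /negbTE h; rewrite /decr h.
set R := \prod_(i < n | i != j) _.
ring.
Qed.

Definition F j k (e : 'I_n -> nat) x : int := if (k <= e j)%N then T (decr e j k) x else 0.

Lemma iter_Dl (B : zmodType) D (P : polyfract B n D) j k x :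
  iter k (Dl j) (pf_eval P) x = \sum_(d : mindex n D) P d *~ F j k (fun i => d i) x.
Proof.
elim: k x => [|k IH] x.
  rewrite /= /pf_eval; apply: eq_bigr => d _; rewrite /F leq0n.
  have -> : decr (fun i => (d i : nat)) j 0 = (fun i => (d i : nat)).
    by apply: functional_extensionality => i; rewrite /decr subn0; case: eqP.
  by [].
rewrite [LHS]/= /Dl !IH -sumrB; apply: eq_bigr => d _; rewrite -mulrzBr; congr (_ *~ _).
rewrite /F.
case: (ltnP k (d j)) => h.
  rewrite (ltnW h) T_delta {1}/decr eqxx subn_gt0 h.
  congr (T _ x); apply: functional_extensionality => i; rewrite /decr; case: (i == j) => //; lia.
case: ifP => h2; last by rewrite subrr.
rewrite T_delta {1}/decr eqxx.
have -> : (d j - k)%N = 0%N by lia.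
by [].
Qed.

Lemma finz_ann (B : finZmodType) (a : B) q : coprime q #|B| -> a *+ q = 0 -> a = 0.
Proof.
move=> cq h.
have h1 : (#[a]%g %| q)%N by rewrite order_dvdn FinRing.zmodXgE h.
have h2 : (#[a]%g %| #|B|)%N by rewrite -cardsT order_dvdG ?inE.
have : (#[a]%g %| 1)%N by rewrite -(eqP cq) dvdn_gcd h1 h2.
by rewrite dvdn1 order_eq1 => /eqP.
Qed.

Lemma ann (B : finZmodType) j q (cq : coprime q #|B|) m :
  forall g : ('I_n -> int) -> B, (forall x, iter m (Dl j) g x = 0) ->
  (forall x, \sum_(t < q) g (shift x j t%:Z) = 0) -> forall x, g x = 0.
Proof.
elim: m => [|m IH] g H0 Hs; first by [].
have h0 : forall x, Dl j g x = 0.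
  apply: IH; first by move=> x; rewrite -iterSr.
  move=> x; rewrite /Dl sumrB.
  have -> : \sum_(t < q) g (shift (shift x j t%:Z) j 1) = \sum_(t < q) g (shift (shift x j 1) j t%:Z).
    by apply: eq_bigr => t _; rewrite !shift_shift addrC.
  by rewrite !Hs subrr.
have inv : forall (t : nat) x, g (shift x j t%:Z) = g x.
  elim=> [|t IHt] x; first by rewrite shift0.
  have -> : (t.+1)%:Z = t%:Z + 1 by rewrite intS addrC.
  rewrite -shift_shift -(IHt x); apply/eqP; rewrite -subr_eq0; apply/eqP; exact: h0.
move=> x; apply: (finz_ann cq).
rewrite -(Hs x) (eq_bigr (fun _ => g x)); last by move=> t _; rewrite inv.
by rewrite sumr_const card_ord.
Qed.

Lemma uniq_pf (B : zmodType) D (P : polyfract B n D) :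
  (forall x, pf_eval P x = 0) -> forall d, P d = 0.
Proof.
move=> H.
suff: forall m (d : mindex n D), (\sum_(i < n) (d i : nat) < m)%N -> P d = 0.
  by move=> S d; apply: (S _ d (ltnSn _)).
elim=> [|m IH] d hd; first by [].
have := H (fun i => (d i : nat)%:Z); rewrite /pf_eval (bigD1 d) //=.
rewrite [X in _ *~ X]big1; last by move=> i _; rewrite binz_nat binn.
rewrite big1 ?mulr1z ?addr0 //.
move=> d' hd'.
case: (boolP [forall i, (d' i <= d i)%N]) => [/forallP hle | /forallPn [i hi]].
  rewrite IH ?mul0rz //.
  have [i hi] : exists i, (d' i : nat) != d i.
    apply/existsP; apply: contraR hd' => /existsPn he; apply/eqP/ffunP => i.
    by apply: val_inj; move: (he i); rewrite negbK => /eqP.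
  rewrite (bigD1 i) //= in hd; rewrite (bigD1 i) //=.
  have hs : (\sum_(k < n | k != i) (d' k : nat) <= \sum_(k < n | k != i) (d k : nat))%N.
    by apply: leq_sum => k _; apply: hle.
  have hlt : (d' i < d i)%N by rewrite ltn_neqAle hi hle.
  rewrite ltnS in hd; apply: leq_trans hd; rewrite -addSn; exact: leq_add.
rewrite (bigD1 i) //= binz_nat bin_small ?mul0r ?mulr0z //.
by rewrite ltnNge.
Qed.

Lemma noinv_periodic (B : zmodType) D (P : polyfract B n D) j k :
  ~ involves P j -> periodic_in P j k.
Proof.
move=> hn x; apply: eq_bigr => d _.
case: (eqVneq (P d) 0) => [->|hP]; first by rewrite !mul0rz.
have hd : (d j : nat) = 0%N.
  apply/eqP; rewrite -leqn0 leqNgt; apply/negP => h; apply: hn; by exists d.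
congr (_ *~ _); apply: eq_bigr => i _; rewrite /shift; case: eqP => [->|] //.
by rewrite hd !binz0.
Qed.

Lemma noinv (B : finZmodType) D (P : polyfract B n D) j q :
  coprime q #|B| -> periodic_in P j q -> ~ involves P j.
Proof.
move=> cq hp.
set f := pf_eval P.
have hD : forall x, Dl j f x = 0.
  apply: (ann (j := j) cq (m := D)).
    move=> x; rewrite -iterSr iter_Dl; apply: big1 => d _; rewrite /F.
    case: ifP => [h|_]; last by rewrite mulr0z.
    by have := ltn_ord (d j); rewrite ltnNge (leq_trans (leqnSn _) h).
  move=> x; rewrite /Dl.
  rewrite -(big_mkord xpredT (fun t => f (shift (shift x j t%:Z) j 1) - f (shift x j t%:Z))).
  rewrite (telescope_sumr_eq (fun k => f (shift x j k%:Z))) //.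
    by rewrite /f hp shift0 subrr.
  move=> k _; rewrite shift_shift.
  by have -> : (k.+1)%:Z = k%:Z + 1 by rewrite intS addrC.
have h1 : forall y, f (shift y j 1) = f y.
  by move=> y; apply/eqP; rewrite -subr_eq0; apply/eqP; exact: hD.
have hnat : forall (t : nat) y, f (shift y j t%:Z) = f y.
  elim=> [|t IHt] y; first by rewrite shift0.
  have -> : (t.+1)%:Z = t%:Z + 1 by rewrite intS addrC.
  by rewrite -shift_shift h1 IHt.
have hinv : forall y (k : int), f (shift y j k) = f y.
  move=> y [t|t]; first exact: hnat.
  set z := shift y j (Negz t).
  have -> : y = shift z j (t.+1)%:Z by rewrite /z shift_shift NegzE addNr shift0.
  by rewrite hnat.
pose R : polyfract B n D := fun d => if (0 < d j)%N then P d else 0.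
have hR : forall x, pf_eval R x = 0.
  move=> x.
  have -> : pf_eval R x = f x - f (shift x j (- x j)).
    rewrite /f /pf_eval -sumrB; apply: eq_bigr => d _; rewrite /R.
    case hd: (0 < d j)%N.
      rewrite [X in _ - _ *~ X](bigD1 j) //= /shift eqxx subrr.
      case E: (d j : nat) hd => [|k] // _.
      by rewrite binz0n mul0r mulr0z subr0.
    have hd0 : (d j : nat) = 0%N by move: hd; case: (d j : nat).
    rewrite mul0rz; apply/eqP; rewrite eq_sym subr_eq0; apply/eqP.
    congr (_ *~ _); apply: eq_bigr => i _; rewrite /shift; case: eqP => [->|] //.
    by rewrite hd0 !binz0.
  by rewrite hinv subrr.
move=> [d [hd hP]]; have := uniq_pf hR d; rewrite /R hd => e.
by rewrite e eqxx in hP.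
Qed.

End Main.

Lemma eval_fst (B1 B2 : zmodType) n D (P : polyfract (B1 * B2)%type n D) x :
  pf_eval (pf_fst P) x = (pf_eval P x).1.
Proof. by rewrite /pf_eval raddf_sum; apply: eq_bigr => d _; rewrite raddfMz. Qed.

Lemma eval_snd (B1 B2 : zmodType) n D (P : polyfract (B1 * B2)%type n D) x :
  pf_eval (pf_snd P) x = (pf_eval P x).2.
Proof. by rewrite /pf_eval raddf_sum; apply: eq_bigr => d _; rewrite raddfMz. Qed.

Theorem theorem3p14 (B1 B2 : finZmodType) (n s : nat) (q : 'I_n -> nat)
  (hq : forall j, (1 < q j)%N) (hs : (s <= n)%N)
  (h1 : coprime (\prod_(j < n | (j < s)%N) q j) #|B2|)
  (h2 : coprime (\prod_(j < n | (s <= j)%N) q j) #|B1|)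
  (D : nat) (P : polyfract (B1 * B2)%type n D) :
  (forall j : 'I_n, periodic_in P j (q j)) <->
  ((forall j : 'I_n, (s <= j)%N -> ~ involves (pf_fst P) j) /\
   (forall j : 'I_n, (j < s)%N -> periodic_in (pf_fst P) j (q j)) /\
   (forall j : 'I_n, (j < s)%N -> ~ involves (pf_snd P) j) /\
   (forall j : 'I_n, (s <= j)%N -> periodic_in (pf_snd P) j (q j))).
Proof.
have ev : forall y, pf_eval P y = (pf_eval (pf_fst P) y, pf_eval (pf_snd P) y).
  by move=> y; rewrite eval_fst eval_snd; case: (pf_eval P y).
split.
  move=> hP.
  have p1 : forall j, periodic_in (pf_fst P) j (q j) by move=> j x; rewrite !eval_fst hP.
  have p2 : forall j, periodic_in (pf_snd P) j (q j) by move=> j x; rewrite !eval_snd hP.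
  split; [|split; [by move=> j _; apply: p1|split; [|by move=> j _; apply: p2]]].
    move=> j hj; apply: (noinv (q := q j)) => //.
    by apply: coprime_dvdl h2; rewrite (bigD1 j) //= dvdn_mulr.
  move=> j hj; apply: (noinv (q := q j)) => //.
  by apply: coprime_dvdl h1; rewrite (bigD1 j) //= dvdn_mulr.
move=> [a [b [c d]]] j x.
have pa : periodic_in (pf_fst P) j (q j).
  by case: (ltnP j s) => h; [apply: b | apply: noinv_periodic; apply: a].
have pb : periodic_in (pf_snd P) j (q j).
  by case: (ltnP j s) => h; [apply: noinv_periodic; apply: c | apply: d].
by rewrite !ev pa pb.
Qed.
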